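(* The set $\{\phi_{j_1,j_2,j_3}\;:\;(j_1,j_2,j_3)\in\mathbf J\}$ of genus two Schur polynomials is a $\mathbb C$-basis of $\mathcal H$.
   Context: A triple $(j_1,j_2,j_3)$ of nonnegative integers is admissible if $|j_1-j_2|\le j_3\le j_1+j_2$ and $j_1+j_2+j_3$ is even; $\mathbf J$ denotes the set of admissible triples. Let $\mathcal H=\mathbb C[x_{12}^{\pm1},x_{13}^{\pm1},x_{23}^{\pm1}]^{\mathbb Z_2\times\mathbb Z_2\times\mathbb Z_2}=\mathbb C[x_{12}+x_{12}^{-1},x_{13}+x_{13}^{-1},x_{23}+x_{23}^{-1}]$. For $a,b\in\{\pm1\}$ set $K_{a,b}(j_1,j_2,j_3)=ab\,\frac{(aj_1+bj_2+j_3+a+b+2)(aj_1+bj_2-j_3+a+b)}{4(j_1+1)(j_2+1)}$. The genus two Schur polynomials $(\phi_{j_1,j_2,j_3})_{(j_1,j_2,j_3)\in\mathbf J}$ are the unique family in $\mathcal H$ with $\phi_{0,0,0}=1$ such that for all admissible $(j_1,j_2,j_3)$: $(x_{12}+x_{12}^{-1})\phi_{j_1,j_2,j_3}=\sum_{a,b\in\{\pm1\}}K_{a,b}(j_1,j_2,j_3)\phi_{j_1+a,j_2+b,j_3}$, $(x_{13}+x_{13}^{-1})\phi_{j_1,j_2,j_3}=\sum_{a,b\in\{\pm1\}}K_{a,b}(j_1,j_3,j_2)\phi_{j_1+a,j_2,j_3+b}$, $(x_{23}+x_{23}^{-1})\phi_{j_1,j_2,j_3}=\sum_{a,b\in\{\pm1\}}K_{a,b}(j_2,j_3,j_1)\phi_{j_1,j_2+a,j_3+b}$,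 where $\phi$ of a non-admissible triple is interpreted as $0$. *)

(* Defs.v *)
From mathcomp Require Import all_boot all_algebra.
From mathcomp Require Import complex.
From mathcomp Require Import Rstruct.
From mathcomp Require Import mpoly.
Import GRing.Theory Num.Theory.
Set Implicit Arguments.
Unset Strict Implicit.
Unset Printing Implicit Defensive.
Local Open Scope ring_scope.

Notation CC := (complex Rdefinitions.R).

(* H = C[x12+x12^-1, x13+x13^-1, x23+x23^-1], a polynomial ring in the three
   algebraically independent generators u12, u13, u23. *)
Notation HH := {mpoly CC[3]}.

Definition u12 : HH := 'X_(0 : 'I_3).
Definition u13 : HH := 'X_(1 : 'I_3).
Definition u23 : HH := 'X_(2 : 'I_3).

Definition triple := (int * int * int)%type.

Definition admissible (t : triple) : bool :=
  let: (j1, j2, j3) := t in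
  [&& (0 <= j1), (0 <= j2), (`|j1 - j2| <= j3), (j3 <= j1 + j2)
    & (2 %| j1 + j2 + j3)%Z].

Definition Kc (a b j1 j2 j3 : int) : CC :=
  (a * b)%:~R * ((a * j1 + b * j2 + j3 + a + b + 2)
                  * (a * j1 + b * j2 - j3 + a + b))%:~R
  / (4 * (j1 + 1) * (j2 + 1))%:~R.

Definition signs : seq int := [:: 1%R; (-1)%R].

Definition ext (phi : triple -> HH) (t : triple) : HH :=
  if admissible t then phi t else 0.

Definition genus2_schur (phi : triple -> HH) : Prop :=
  phi (0, 0, 0) = 1 /\
  forall j1 j2 j3 : int, admissible (j1, j2, j3) ->
    [/\ u12 * phi (j1, j2, j3) =
          \sum_(a <- signs) \sum_(b <- signs)
             Kc a b j1 j2 j3 *: ext phi (j1 + a, j2 + b, j3),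
        u13 * phi (j1, j2, j3) =
          \sum_(a <- signs) \sum_(b <- signs)
             Kc a b j1 j3 j2 *: ext phi (j1 + a, j2, j3 + b)
      & u23 * phi (j1, j2, j3) =
          \sum_(a <- signs) \sum_(b <- signs)
             Kc a b j2 j3 j1 *: ext phi (j1, j2 + a, j3 + b)].

Definition is_basis_on_J (phi : triple -> HH) : Prop :=
  (forall (s : seq triple) (c : triple -> CC),
      uniq s -> all admissible s ->
      \sum_(t <- s) c t *: phi t = 0 ->
      forall t, t \in s -> c t = 0)
  /\
  (forall p : HH, exists (s : seq triple) (c : triple -> CC),
      all admissible s /\ p = \sum_(t <- s) c t *: phi t).

(* Main.v *)
Require Import Defs.
From mathcomp Require Import all_boot all_order all_algebra.
From mathcomp Require Import complex.
From mathcomp Require Import Rstruct.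
From mathcomp Require Import mpoly.
From mathcomp Require Import ring lra zify.
Import Order.TTheory GRing.Theory Num.Theory.
Local Open Scope ring_scope.

Definition addT (x d : triple) : triple := (x.1.1 + d.1.1, x.1.2 + d.1.2, x.2 + d.2).
Lemma addTA x d e : addT (addT x d) e = addT x (addT d e).
Proof. by rewrite /addT /= !addrA. Qed.

Definition inN3 (x : triple) : bool := [&& 0 <= x.1.1, 0 <= x.1.2 & 0 <= x.2].

Definition co (x d : triple) (num den : int) : CC :=
  if inN3 x && inN3 (addT x d) then num%:~R / den%:~R else 0.

Definition sT (x : triple) : int := x.1.1 + x.1.2 + x.2.

Definition rel12 (x : triple) : seq (CC * triple) :=
  let p := x.1.1 in let q := x.1.2 in let r := x.2 in let s := sT x in
  let D := ((q + r + 1) * (p + r + 1))%R in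
  [:: (co x (0,0,1) ((s+2)*(r+1)) D, addT x (0,0,1));
      (co x (-1,1,0) ((q+1) * p) D, addT x (-1,1,0));
      (co x (1,-1,0) ((p+1) * q) D, addT x (1,-1,0));
      (co x (0,0,-1) (r*(s+1)) D, addT x (0,0,-1))].

Definition rel13 (x : triple) : seq (CC * triple) :=
  let p := x.1.1 in let q := x.1.2 in let r := x.2 in let s := sT x in
  let D := ((q + r + 1) * (p + q + 1))%R in
  [:: (co x (0,1,0) ((s+2)*(q+1)) D, addT x (0,1,0));
      (co x (-1,0,1) ((r+1) * p) D, addT x (-1,0,1));
      (co x (1,0,-1) ((p+1) * r) D, addT x (1,0,-1));
      (co x (0,-1,0) (q*(s+1)) D, addT x (0,-1,0))].

Definition rel23 (x : triple) : seq (CC * triple) :=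
  let p := x.1.1 in let q := x.1.2 in let r := x.2 in let s := sT x in
  let D := ((p + r + 1) * (p + q + 1))%R in
  [:: (co x (1,0,0) ((s+2)*(p+1)) D, addT x (1,0,0));
      (co x (0,-1,1) ((r+1) * q) D, addT x (0,-1,1));
      (co x (0,1,-1) ((q+1) * r) D, addT x (0,1,-1));
      (co x (-1,0,0) (p*(s+1)) D, addT x (-1,0,0))].

Definition expand (rel : triple -> seq (CC * triple)) (G : triple -> CC) (x : triple) : CC :=
  \sum_(y <- rel x) y.1 * G y.2.

Definition commS (relA relB : triple -> seq (CC * triple)) (G : triple -> CC) (x : triple) :=
  \sum_(y <- relB x) y.1 * expand relA G y.2 = \sum_(y <- relA x) y.1 * expand relB G y.2.

Ltac normpos x :=
  repeat match goal with |- context [addT (addT x ?d) ?e] => rewrite (addTA x d e) end;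
  repeat match goal with |- context [addT ?d ?e] =>
     tryif constr_eq d x then fail else
     (let v := eval vm_compute in (addT d e) in change (addT d e) with v) end.

Ltac evguards :=
  repeat match goal with |- context [if ?b then _ else _] =>
    (rewrite (_ : b = true); last by (apply/idP; rewrite /inN3 /addT /=; lia)) ||
    (rewrite (_ : b = false); last by (apply/negbTE/negP; rewrite /inN3 /addT /=; lia)) end.

Ltac toZ e := lazymatch e with
 | @Algebra.add _ ?a ?b => let x := toZ a in let y := toZ b in constr:((x + y)%R : int)
 | @Algebra.opp _ ?a => let x := toZ a in constr:((- x)%R : int)
 | @GRing.mul _ ?a ?b => let x := toZ a in let y := toZ b in constr:((x * y)%R : int)
 | @Algebra.natmul _ _ ?n => constr:(Posz n)
 | @intmul _ _ ?z => z
 | @Algebra.zero _ => constr:(0 : int)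
 | @GRing.one _ => constr:(1 : int)
 end.
Ltac nzside := try done; repeat (apply/andP; split);
  match goal with |- is_true (negb (@eq_op _ ?e _)) => let z := toZ e in
    rewrite (_ : e = z%:~R); [rewrite intr_eq0; lia | ring] end.

Ltac solve_case x := rewrite /co; evguards; rewrite /x /sT /addT /=; field; nzside.

Lemma commS12_13 G x : inN3 x -> commS rel12 rel13 G x.
Proof.
case: x => [[p q] r]; rewrite /inN3 /= => /and3P [hp hq hr].
case: p hp => // a _; case: q hq => // b _; case: r hr => // c _.
set x := (Posz a, _, _). rewrite /commS /expand /rel12 /rel13 !big_cons !big_nil /=.
normpos x.
case: a @x => [|[|a]] x; case: b @x => [|[|b]] x; case: c @x => [|[|c]] x; solve_case x.
Qed.

Lemma commS12_23 G x : inN3 x -> commS rel12 rel23 G x.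
Proof.
case: x => [[p q] r]; rewrite /inN3 /= => /and3P [hp hq hr].
case: p hp => // a _; case: q hq => // b _; case: r hr => // c _.
set x := (Posz a, _, _). rewrite /commS /expand /rel12 /rel23 !big_cons !big_nil /=.
normpos x.
case: a @x => [|[|a]] x; case: b @x => [|[|b]] x; case: c @x => [|[|c]] x; solve_case x.
Qed.

Lemma commS13_23 G x : inN3 x -> commS rel13 rel23 G x.
Proof.
case: x => [[p q] r]; rewrite /inN3 /= => /and3P [hp hq hr].
case: p hp => // a _; case: q hq => // b _; case: r hr => // c _.
set x := (Posz a, _, _). rewrite /commS /expand /rel13 /rel23 !big_cons !big_nil /=.
normpos x.
case: a @x => [|[|a]] x; case: b @x => [|[|b]] x; case: c @x => [|[|c]] x; solve_case x.
Qed.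


Definition holds (u : HH) (rel : triple -> seq (CC * triple)) (F : triple -> HH) (x : triple) :=
  u * F x = \sum_(y <- rel x) y.1 *: F y.2.

Definition commH (relA relB : triple -> seq (CC * triple)) (F : triple -> HH) (x : triple) :=
  \sum_(y <- relB x) y.1 *: \sum_(z <- relA y.2) z.1 *: F z.2
  = \sum_(y <- relA x) y.1 *: \sum_(z <- relB y.2) z.1 *: F z.2.

Lemma mcoeffS (I : Type) (r : seq I) (f : I -> HH) m :
  (\sum_(i <- r) f i)@_m = \sum_(i <- r) (f i)@_m.
Proof.
elim: r => [|a r IH]; first by rewrite !big_nil mcoeff0.
by rewrite !big_cons mcoeffD IH.
Qed.

Lemma commS_H relA relB F x :
  (forall G, commS relA relB G x) -> commH relA relB F x.
Proof.
move=> hS; apply/mpolyP => m.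
have := hS (fun y => (F y)@_m); rewrite /commS /expand => e.
rewrite !mcoeffS.
transitivity (\sum_(y <- relB x) y.1 * \sum_(z <- relA y.2) z.1 * (F z.2)@_m).
  by apply: eq_bigr => y _; rewrite mcoeffZ mcoeffS; congr (_ * _);
     apply: eq_bigr => z _; rewrite mcoeffZ.
rewrite e; apply: eq_bigr => y _; rewrite mcoeffZ mcoeffS; congr (_ * _);
  by apply: eq_bigr => z _; rewrite mcoeffZ.
Qed.

Lemma comm_step u v relA relB F x :
  holds u relA F x -> holds v relB F x ->
  (forall y, y \in behead (relA x) -> holds v relB F y.2) ->
  (forall y, y \in relB x -> holds u relA F y.2) ->
  (head (0, x) (relA x)).1 != 0 ->
  commH relA relB F x -> holds v relB F (head (0,x) (relA x)).2.
Proof.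
rewrite /holds /commH.
case E: (relA x) => [|[c t] rest] //= hA hB hrest hall nzc hC.
apply: (scalerI nzc).
rewrite scalerAr.
have -> : c *: F t = u * F x - \sum_(y <- rest) y.1 *: F y.2.
  by rewrite hA big_cons /= addrK.
rewrite mulrBr mulrCA hB mulr_sumr.
under eq_big_seq => y yin do rewrite -scalerAr (hall y yin).
rewrite hC big_cons /= mulr_sumr.
under [X in _ - X]eq_big_seq => y yin do rewrite -scalerAr (hrest y yin).
by rewrite addrK scaler_sumr.
Qed.

Lemma holds_zero u rel F x : F x = 0 -> all (fun y => y.1 == 0) (rel x) ->
  holds u rel F x.
Proof.
move=> Fx0 hall; rewrite /holds Fx0 mulr0 big_seq big1 // => y yin.
by move/allP: hall => /(_ y yin) /eqP ->; rewrite scale0r.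
Qed.

Lemma rel12_out x : ~~ inN3 x -> all (fun y => y.1 == 0) (rel12 x).
Proof. by move=> h; rewrite /rel12 /co (negbTE h) /= eqxx. Qed.
Lemma rel13_out x : ~~ inN3 x -> all (fun y => y.1 == 0) (rel13 x).
Proof. by move=> h; rewrite /rel13 /co (negbTE h) /= eqxx. Qed.
Lemma rel23_out x : ~~ inN3 x -> all (fun y => y.1 == 0) (rel23 x).
Proof. by move=> h; rewrite /rel23 /co (negbTE h) /= eqxx. Qed.

Lemma rel12_below x y : y \in behead (rel12 x) -> sT y.2 <= sT x.
Proof. rewrite /rel12 /= !inE => /or3P [] /eqP -> /=; rewrite /sT /addT /=; lia. Qed.
Lemma rel13_below x y : y \in behead (rel13 x) -> sT y.2 <= sT x.
Proof. rewrite /rel13 /= !inE => /or3P [] /eqP -> /=; rewrite /sT /addT /=; lia. Qed.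
Lemma rel23_below x y : y \in behead (rel23 x) -> sT y.2 <= sT x.
Proof. rewrite /rel23 /= !inE => /or3P [] /eqP -> /=; rewrite /sT /addT /=; lia. Qed.

Arguments rel12_below {x y}.
Arguments rel13_below {x y}.
Arguments rel23_below {x y}.

Lemma co_nz x d num den : inN3 x -> inN3 (addT x d) -> 0 < num -> 0 < den ->
  co x d num den != 0.
Proof.
move=> hx hy hn hd; rewrite /co hx hy /= mulf_neq0 ?invr_eq0 ?intr_eq0 //; lia.
Qed.

Definition step (F : triple -> HH) (x : triple) : HH :=
  let go u rel d := let x0 := addT x d in
      (head (0,x0) (rel x0)).1^-1 *: (u * F x0 - \sum_(y <- behead (rel x0)) y.1 *: F y.2) in
  if 0 < x.2 then go u12 rel12 (0,0,-1)
  else if 0 < x.1.2 then go u13 rel13 (0,-1,0)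
  else if 0 < x.1.1 then go u23 rel23 (-1,0,0) else 0.

Fixpoint phf (n : nat) (x : triple) : HH :=
  match n with
  | 0 => if x == (0,0,0) then 1 else 0
  | n'.+1 => if ~~ inN3 x then 0 else if sT x <= n'%:Z then phf n' x else step (phf n') x
  end.

Definition Phi (x : triple) : HH := phf `|sT x|%N x.

Lemma phf_out n x : ~~ inN3 x -> phf n x = 0.
Proof.
case: n => [|n] /= h; last by rewrite h.
by case: eqP => // ex; move: h; rewrite ex.
Qed.

Lemma phf_st n x : inN3 x -> sT x <= n%:Z -> phf n x = Phi x.
Proof.
move=> hx; have hs : 0 <= sT x by move: hx; rewrite /inN3 /sT => /and3P[]; lia.
elim: n => [|n IH] hn.
  by rewrite /Phi (_ : `|sT x|%N = 0%N) //; lia.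
rewrite /= hx /=; case: ifP => h; first exact: IH.
by rewrite /Phi (_ : `|sT x|%N = n.+1) /= ?hx ?h //; lia.
Qed.

Lemma phf_Phi n x : (~~ inN3 x) || (sT x <= n%:Z) -> phf n x = Phi x.
Proof.
case hx: (inN3 x) => /= h; first exact: phf_st.
by rewrite /Phi !phf_out ?hx.
Qed.

Lemma Phi_out x : ~~ inN3 x -> Phi x = 0.
Proof. exact: phf_out. Qed.

Lemma def_gen u rel F x k t rest :
  rel x = (k, t) :: rest -> k != 0 ->
  F t = k^-1 *: (u * F x - \sum_(y <- rest) y.1 *: F y.2) -> holds u rel F x.
Proof.
move=> E nk ht; rewrite /holds E big_cons /= ht scalerA divrr ?unitfE // scale1r.
by rewrite subrK.
Qed.

Lemma inN3_sT x : inN3 x -> 0 <= sT x.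
Proof. by rewrite /inN3 /sT => /and3P[]; lia. Qed.

Arguments inN3_sT {x}.
Ltac tsimpl := rewrite /inN3 /sT /addT /=.

Lemma R12_def x : inN3 x -> holds u12 rel12 Phi x.
Proof.
move=> hx; set n := `|sT x|%N.
have hn : sT x = n%:Z by have := inN3_sT hx; rewrite /n; lia.
set t := addT x (0,0,1).
have ht : inN3 t by move: hx; tsimpl; lia.
apply: (@def_gen _ _ _ _ (co x (0,0,1) ((sT x+2)*(x.2+1)) ((x.1.2 + x.2 + 1) * (x.1.1 + x.2 + 1)))
  t (behead (rel12 x))) => //.
  by apply: co_nz => //; move: hx; tsimpl; lia.
have -> : Phi t = phf n.+1 t by rewrite /Phi; congr phf; move: hn; tsimpl; lia.
rewrite /= ht /= ifN; last by move: hn; tsimpl; lia.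
rewrite /step ifT; last by move: hx; tsimpl; lia.
have ex : addT t (0,0,-1) = x.
  rewrite /t addTA; case: (x) => [[p q] r]; rewrite /addT /=; congr (_,_,_); lia.
rewrite ex.
rewrite (phf_Phi n x); last by rewrite hn lexx orbT.
congr (_ *: (_ - _)).
apply: eq_big_seq => y yin; rewrite phf_Phi //.
by rewrite -hn rel12_below ?orbT.
Qed.

Lemma R13_def x : inN3 x -> x.2 = 0 -> holds u13 rel13 Phi x.
Proof.
move=> hx hr; set n := `|sT x|%N.
have hn : sT x = n%:Z by have := inN3_sT hx; rewrite /n; lia.
set t := addT x (0,1,0).
have ht : inN3 t by move: hx; tsimpl; lia.
apply: (@def_gen _ _ _ _ (co x (0,1,0) ((sT x+2)*(x.1.2+1)) ((x.1.2 + x.2 + 1) * (x.1.1 + x.1.2 + 1)))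
  t (behead (rel13 x))) => //.
  by apply: co_nz => //; move: hx; tsimpl; lia.
have -> : Phi t = phf n.+1 t by rewrite /Phi; congr phf; move: hn; tsimpl; lia.
rewrite /= ht /= ifN; last by move: hn; tsimpl; lia.
rewrite /step ifF; last by move: hr; tsimpl; lia.
rewrite ifT; last by move: hx; tsimpl; lia.
have ex : addT t (0,-1,0) = x.
  rewrite /t addTA; case: (x) => [[p q] r]; rewrite /addT /=; congr (_,_,_); lia.
rewrite ex.
rewrite (phf_Phi n x); last by rewrite hn lexx orbT.
congr (_ *: (_ - _)).
apply: eq_big_seq => y yin; rewrite phf_Phi //.
by rewrite -hn rel13_below ?orbT.
Qed.

Lemma R23_def x : inN3 x -> x.2 = 0 -> x.1.2 = 0 -> holds u23 rel23 Phi x.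
Proof.
move=> hx hr hq; set n := `|sT x|%N.
have hn : sT x = n%:Z by have := inN3_sT hx; rewrite /n; lia.
set t := addT x (1,0,0).
have ht : inN3 t by move: hx; tsimpl; lia.
apply: (@def_gen _ _ _ _ (co x (1,0,0) ((sT x+2)*(x.1.1+1)) ((x.1.1 + x.2 + 1) * (x.1.1 + x.1.2 + 1)))
  t (behead (rel23 x))) => //.
  by apply: co_nz => //; move: hx; tsimpl; lia.
have -> : Phi t = phf n.+1 t by rewrite /Phi; congr phf; move: hn; tsimpl; lia.
rewrite /= ht /= ifN; last by move: hn; tsimpl; lia.
rewrite /step ifF; last by move: hr; tsimpl; lia.
rewrite ifF; last by move: hq; tsimpl; lia.
rewrite ifT; last by move: hx; tsimpl; lia.
have ex : addT t (-1,0,0) = x.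
  rewrite /t addTA; case: (x) => [[p q] r]; rewrite /addT /=; congr (_,_,_); lia.
rewrite ex.
rewrite (phf_Phi n x); last by rewrite hn lexx orbT.
congr (_ *: (_ - _)).
apply: eq_big_seq => y yin; rewrite phf_Phi //.
by rewrite -hn rel23_below ?orbT.
Qed.

Lemma R12_all x : holds u12 rel12 Phi x.
Proof.
case hx: (inN3 x); first exact: R12_def.
by apply: holds_zero; rewrite ?Phi_out ?rel12_out ?hx.
Qed.

Lemma rel12_le x y : y \in rel12 x -> sT y.2 <= sT x + 1.
Proof. rewrite /rel12 /= !inE => /or4P [] /eqP -> /=; rewrite /sT /addT /=; lia. Qed.
Lemma rel13_le x y : y \in rel13 x -> sT y.2 <= sT x + 1.
Proof. rewrite /rel13 /= !inE => /or4P [] /eqP -> /=; rewrite /sT /addT /=; lia. Qed.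
Lemma rel23_le x y : y \in rel23 x -> sT y.2 <= sT x + 1.
Proof. rewrite /rel23 /= !inE => /or4P [] /eqP -> /=; rewrite /sT /addT /=; lia. Qed.
Arguments rel12_le {x y}.
Arguments rel13_le {x y}.
Arguments rel23_le {x y}.

Lemma R_all_n (n : nat) x : inN3 x -> sT x = n%:Z ->
  holds u13 rel13 Phi x /\ holds u23 rel23 Phi x.
Proof.
elim/ltn_ind: n x => n IH.
have below : forall y, (~~ inN3 y) || (sT y < n%:Z) ->
    holds u13 rel13 Phi y /\ holds u23 rel23 Phi y.
  move=> y; case hy: (inN3 y) => /= h.
    have hs := inN3_sT hy.
    apply: (IH `|sT y|%N _ y hy); lia.
  by split; apply: holds_zero; rewrite ?Phi_out ?rel13_out ?rel23_out ?hy.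
have below13 : forall y, (~~ inN3 y) || (sT y < n%:Z) -> holds u13 rel13 Phi y.
  by move=> y h; case: (below y h).
have below23 : forall y, (~~ inN3 y) || (sT y < n%:Z) -> holds u23 rel23 Phi y.
  by move=> y h; case: (below y h).
have R13n : forall y, inN3 y -> sT y = n%:Z -> holds u13 rel13 Phi y.
  move=> y hy hyn; case: (y.2 =P 0) => hr; first exact: R13_def.
  set y0 := addT y (0,0,-1).
  have hy0 : inN3 y0 by move: hy hr; rewrite /y0; tsimpl; lia.
  have sy0 : sT y0 = sT y - 1 by rewrite /y0; tsimpl; lia.
  have ey : addT y0 (0,0,1) = y.
    by rewrite /y0 addTA; case: (y) => [[p q] r]; rewrite /addT /=; congr (_,_,_); lia.
  have := @comm_step u12 u13 rel12 rel13 Phi y0 (R12_all y0) (below13 y0 _) _ _ _ _.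
  rewrite /= ey; apply; try (by rewrite sy0 ?hyn ?hxn; lia).
  - move=> z zin; apply: (below13 (z.2)); case: (inN3 z.2) => //=.
    by have := rel12_below zin; rewrite sy0 hyn; move: (sT _) => v; lia.
  - by move=> z _; apply: R12_all.
  - by apply: co_nz => //; move: hy0 hy; rewrite ?ey; tsimpl; lia.
  - by apply: commS_H => G; apply: commS12_13.
have R13le : forall y, (~~ inN3 y) || (sT y <= n%:Z) -> holds u13 rel13 Phi y.
  move=> y; case hy: (inN3 y) => /= h; last by apply: (below13 y); rewrite hy.
  have [e|lt] := eqVneq (sT y) n%:Z; first exact: R13n.
  by apply: (below13 y); rewrite hy /= lt_neqAle lt h.
move=> x hx hxn; split; first exact: R13n.
case: (x.2 =P 0) => hr.
  case: (x.1.2 =P 0) => hq; first exact: R23_def.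
  set y0 := addT x (0,-1,0).
  have hy0 : inN3 y0 by move: hx hq; rewrite /y0; tsimpl; lia.
  have sy0 : sT y0 = sT x - 1 by rewrite /y0; tsimpl; lia.
  have ey : addT y0 (0,1,0) = x.
    by rewrite /y0 addTA; case: (x) => [[p q] r]; rewrite /addT /=; congr (_,_,_); lia.
  have := @comm_step u13 u23 rel13 rel23 Phi y0 (below13 y0 _) (below23 y0 _) _ _ _ _.
  rewrite /= ey; apply; try (by rewrite sy0 ?hyn ?hxn; lia).
  - move=> z zin; apply: (below23 (z.2)); case: (inN3 z.2) => //=.
    by have := rel13_below zin; rewrite sy0 hxn; move: (sT _) => v; lia.
  - move=> z zin; apply: R13le; case: (inN3 z.2) => //=.
    by have := rel23_le zin; rewrite sy0 hxn; move: (sT _) => v; lia.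
  - by apply: co_nz => //; move: hy0 hx; rewrite ?ey; tsimpl; lia.
  - by apply: commS_H => G; apply: commS13_23.
set y0 := addT x (0,0,-1).
have hy0 : inN3 y0 by move: hx hr; rewrite /y0; tsimpl; lia.
have sy0 : sT y0 = sT x - 1 by rewrite /y0; tsimpl; lia.
have ey : addT y0 (0,0,1) = x.
  by rewrite /y0 addTA; case: (x) => [[p q] r]; rewrite /addT /=; congr (_,_,_); lia.
have := @comm_step u12 u23 rel12 rel23 Phi y0 (R12_all y0) (below23 y0 _) _ _ _ _.
rewrite /= ey; apply; try (by rewrite sy0 ?hyn ?hxn; lia).
- move=> z zin; apply: (below23 (z.2)); case: (inN3 z.2) => //=.
  by have := rel12_below zin; rewrite sy0 hxn; move: (sT _) => v; lia.
- by move=> z _; apply: R12_all.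
- by apply: co_nz => //; move: hy0 hx; rewrite ?ey; tsimpl; lia.
- by apply: commS_H => G; apply: commS12_23.
Qed.

Lemma R13_all x : holds u13 rel13 Phi x.
Proof.
case hx: (inN3 x); last by apply: holds_zero; rewrite ?Phi_out ?rel13_out ?hx.
have hs := inN3_sT hx.
by case: (@R_all_n `|sT x|%N x hx ltac:(lia)).
Qed.

Lemma R23_all x : holds u23 rel23 Phi x.
Proof.
case hx: (inN3 x); last by apply: holds_zero; rewrite ?Phi_out ?rel23_out ?hx.
have hs := inN3_sT hx.
by case: (@R_all_n `|sT x|%N x hx ltac:(lia)).
Qed.

Lemma Phi0 : Phi (0,0,0) = 1.
Proof. by []. Qed.

Definition jc (x : triple) : triple := (x.1.2 + x.2, x.1.1 + x.2, x.1.1 + x.1.2).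
Definition pqr (t : triple) : triple :=
  (((t.1.2 + t.2 - t.1.1) %/ 2)%Z, ((t.1.1 + t.2 - t.1.2) %/ 2)%Z, ((t.1.1 + t.1.2 - t.2) %/ 2)%Z).

Lemma adm_jc x : admissible (jc x) = inN3 x.
Proof.
case: x => [[p q] r]; rewrite /admissible /jc /inN3 /=.
have -> : (2 %| q + r + (p + r) + (p + q))%Z.
  by rewrite (_ : q + r + (p + r) + (p + q) = (p + q + r) * 2); [apply: dvdz_mull; apply: dvdzz | ring].
rewrite andbT.
by apply/idP/idP => /and3P; [case=> h1 h2 /andP [h3 h4] | case=> h1 h2 h3];
  apply/and3P; split=> //; try apply/andP; try split; lia.
Qed.

Lemma div2K (k : int) : ((k * 2) %/ 2)%Z = k.
Proof. by rewrite mulzK. Qed.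

Lemma pqr_jc x : pqr (jc x) = x.
Proof.
case: x => [[p q] r]; rewrite /pqr /jc /=.
rewrite (_ : p + r + (p + q) - (q + r) = p * 2); last by ring.
rewrite (_ : q + r + (p + q) - (p + r) = q * 2); last by ring.
rewrite (_ : q + r + (p + r) - (p + q) = r * 2); last by ring.
by rewrite !div2K.
Qed.

Lemma jc_pqr t : admissible t -> jc (pqr t) = t /\ inN3 (pqr t).
Proof.
case: t => [[j1 j2] j3]; rewrite /admissible /= => /and5P [h1 h2 h3 h4 /dvdzP [k hk]].
rewrite /pqr /jc /=.
rewrite (_ : j2 + j3 - j1 = (k - j1) * 2); last by rewrite mulrBl -hk; ring.
rewrite (_ : j1 + j3 - j2 = (k - j2) * 2); last by rewrite mulrBl -hk; ring.
rewrite (_ : j1 + j2 - j3 = (k - j3) * 2); last by rewrite mulrBl -hk; ring.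
rewrite !div2K /inN3 /=; split; first by congr (_,_,_); lia.
apply/and3P; split; lia.
Qed.

Definition Fof (phi : triple -> HH) (x : triple) : HH := ext phi (jc x).

Lemma term_eq phi x d (num den : int) k tgt : inN3 x -> tgt = jc (addT x d) ->
  (inN3 (addT x d) -> k = num%:~R / den%:~R) ->
  k *: ext phi tgt = co x d num den *: Fof phi (addT x d).
Proof.
move=> hx -> hk; rewrite /co /Fof hx /=; case h: (inN3 (addT x d)); first by rewrite hk.
by rewrite /ext adm_jc h !scaler0.
Qed.

Ltac conv_term :=
  apply: term_eq => //; [rewrite /jc /addT /=; congr (_,_,_); lia
                        | move=> _; rewrite /Kc /sT /=; field; nzside].

Lemma conv12 phi x : inN3 x ->
  \sum_(a <- signs) \sum_(b <- signs)
     Kc a b (jc x).1.1 (jc x).1.2 (jc x).2 *: ext phi ((jc x).1.1 + a, (jc x).1.2 + b, (jc x).2)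
  = \sum_(y <- rel12 x) y.1 *: Fof phi y.2.
Proof.
move=> hx; have := hx; case: x hx => [[p q] r] hx; rewrite /inN3 /= => /and3P [hp hq hr].
rewrite /signs /rel12 !big_cons !big_nil /= !addr0 -!addrA.
congr (_ + (_ + (_ + _))); conv_term.
Qed.

Lemma conv13 phi x : inN3 x ->
  \sum_(a <- signs) \sum_(b <- signs)
     Kc a b (jc x).1.1 (jc x).2 (jc x).1.2 *: ext phi ((jc x).1.1 + a, (jc x).1.2, (jc x).2 + b)
  = \sum_(y <- rel13 x) y.1 *: Fof phi y.2.
Proof.
move=> hx; have := hx; case: x hx => [[p q] r] hx; rewrite /inN3 /= => /and3P [hp hq hr].
rewrite /signs /rel13 !big_cons !big_nil /= !addr0 -!addrA.
congr (_ + (_ + (_ + _))); conv_term.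
Qed.

Lemma conv23 phi x : inN3 x ->
  \sum_(a <- signs) \sum_(b <- signs)
     Kc a b (jc x).1.2 (jc x).2 (jc x).1.1 *: ext phi ((jc x).1.1, (jc x).1.2 + a, (jc x).2 + b)
  = \sum_(y <- rel23 x) y.1 *: Fof phi y.2.
Proof.
move=> hx; have := hx; case: x hx => [[p q] r] hx; rewrite /inN3 /= => /and3P [hp hq hr].
rewrite /signs /rel23 !big_cons !big_nil /= !addr0 -!addrA.
congr (_ + (_ + (_ + _))); conv_term.
Qed.
Definition mono (x : triple) : 'X_{1..3} :=
  (U_((0%R : 'I_3)) *+ `|x.2| + U_((1%R : 'I_3)) *+ `|x.1.2| + U_((2%R : 'I_3)) *+ `|x.1.1|)%MM.
Lemma monoE x (i : 'I_3) : mono x i = (if i == 0 :> nat then `|x.2| else if i == 1 :> nat then `|x.1.2| else `|x.1.1|)%N.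
Proof.
rewrite /mono !mnmDE !mulmnE !mnm1E.
by case: i => [[|[|[|i]]] hi] //=; rewrite ?mul1n ?mul0n ?addn0 ?add0n.
Qed.
Lemma mdeg_mono x : mdeg (mono x) = (`|x.2| + `|x.1.2| + `|x.1.1|)%N.
Proof. by rewrite /mono !mdegD !mdegMn !mdeg1 !mul1n. Qed.
Lemma coefX (i : 'I_3) (p : HH) m :
  ('X_i * p)@_m = if (0 < m i)%N then p@_(m - U_(i))%MM else 0.
Proof.
case: ifP => hmi.
  have hle : (U_(i) <= m)%MM.
    by apply/mnm_lepP => j; rewrite mnm1E; case: eqP => [<-|] //.
  by rewrite -{1}(submK hle) mulrC addmC mcoeffMX.
apply/eqP; rewrite mcoeff_eq0 mulrC (perm_mem (msuppMX _ _)); apply/negP => /mapP [m' _ em].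
by move: hmi; rewrite em mnmDE mnm1E eqxx.
Qed.

Definition LT (F : triple -> HH) (x : triple) :=
  exists2 c : CC, c != 0 & forall m, (`|sT x| <= mdeg m)%N -> (F x)@_m = c * (m == mono x)%:R.

Lemma mdeg_mono' x : inN3 x -> mdeg (mono x) = `|sT x|%N.
Proof. by rewrite mdeg_mono /inN3 /sT => /and3P [h1 h2 h3]; lia. Qed.

Lemma mono_inj x y : inN3 x -> inN3 y -> mono x = mono y -> x = y.
Proof.
move=> hx hy e.
have e0 := congr1 (fun m : 'X_{1..3} => m (0%R : 'I_3)) e.
have e1 := congr1 (fun m : 'X_{1..3} => m (1%R : 'I_3)) e.
have e2 := congr1 (fun m : 'X_{1..3} => m (2%R : 'I_3)) e.
clear e; move: e0 e1 e2; rewrite /= !monoE /=.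
move: hx hy; case: x => [[a b] c]; case: y => [[a' b'] c']; rewrite /inN3 /=.
move=> /and3P [? ? ?] /and3P [? ? ?] ? ? ?; congr (_,_,_); lia.
Qed.

Lemma LT_zero F y m : inN3 y -> LT F y -> (`|sT y| < mdeg m)%N -> (F y)@_m = 0.
Proof.
move=> hy [c _ hc] hm; rewrite hc ?(ltnW hm) //.
case: eqP => [em|]; last by rewrite mulr0.
by move: hm; rewrite em mdeg_mono' // ltnn.
Qed.

Lemma LT_step F (i : 'I_3) x0 x k (S : HH) :
  mono x = (U_(i) + mono x0)%MM -> `|sT x|%N = (`|sT x0|).+1 -> LT F x0 -> k != 0 ->
  F x = k^-1 *: ('X_i * F x0 - S) ->
  (forall m, (`|sT x| <= mdeg m)%N -> S@_m = 0) -> LT F x.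
Proof.
move=> emono edeg [c0 nc0 hc0] nk hF hS.
exists (k^-1 * c0); first by rewrite mulf_neq0 ?invr_eq0.
move=> m hm; rewrite hF mcoeffZ mcoeffB (hS m hm) subr0 coefX.
case: ifP => hmi.
  have hle : (U_(i) <= m)%MM.
    by apply/mnm_lepP => j; rewrite mnm1E; case: eqP => [<-|] //.
  have em : m = ((m - U_(i)) + U_(i))%MM by rewrite submK.
  rewrite hc0; last first.
    by move: hm; rewrite edeg {1}em mdegD mdeg1 addn1 ltnS.
  have -> : (m - U_(i) == mono x0)%MM = (m == mono x).
    case: (eqVneq m (mono x)) => [->|ne]; first by rewrite emono addmC addmK !eqxx.
    apply/negbTE/negP => /eqP e; move/eqP: ne; apply.
    by rewrite emono em e addmC.
  by rewrite mulrA.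
rewrite mulr0; case: eqP => [em|]; last by rewrite mulr0.
by move: hmi; rewrite em emono mnmDE mnm1E eqxx.
Qed.

Lemma LT_gen F (i : 'I_3) rel x0 x :
  (forall y, ~~ inN3 y -> F y = 0) ->
  holds 'X_i rel F x0 -> (head (0,x0) (rel x0)).2 = x -> (head (0,x0) (rel x0)).1 != 0 ->
  mono x = (U_(i) + mono x0)%MM -> `|sT x|%N = (`|sT x0|).+1 ->
  LT F x0 ->
  (forall y, y \in behead (rel x0) -> inN3 y.2 -> LT F y.2 /\ (`|sT y.2| <= `|sT x0|)%N) ->
  LT F x.
Proof.
move=> hout; rewrite /holds; case: (rel x0) => [|[k t] rest] /=; first by rewrite eqxx.
move=> hh et nk emono edeg hLT hrest.
apply: (@LT_step F i x0 x k (\sum_(y <- rest) y.1 *: F y.2) emono edeg hLT nk).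
  by rewrite hh big_cons /= addrK scalerA mulVf // scale1r et.
move=> m hm; rewrite mcoeffS big_seq big1 // => y yin; rewrite mcoeffZ.
case hy: (inN3 y.2); last by rewrite hout ?hy // mcoeff0 mulr0.
have [hL hd] := hrest y yin hy.
by rewrite (@LT_zero F y.2 m hy hL) ?mulr0 //; apply: leq_trans hm; rewrite edeg ltnS.
Qed.

Section LTall.
Variable F : triple -> HH.
Hypothesis hF0 : F (0,0,0) = 1.
Hypothesis hout : forall y, ~~ inN3 y -> F y = 0.
Hypothesis h12 : forall x, inN3 x -> holds u12 rel12 F x.
Hypothesis h13 : forall x, inN3 x -> holds u13 rel13 F x.
Hypothesis h23 : forall x, inN3 x -> holds u23 rel23 F x.

Lemma LT_all_n (n : nat) x : inN3 x -> `|sT x|%N = n -> LT F x.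
Proof.
elim/ltn_ind: n x => n IH x hx hn.
have IH' : forall y, inN3 y -> (`|sT y| < n)%N -> LT F y.
  by move=> y hy hlt; apply: (IH _ hlt y hy).
move: hx; case: x hn => [[p q] r] hn hx; have := hx; rewrite /inN3 /= => /and3P [hp hq hr].
have hrest : forall (rl : triple -> seq (CC * triple)) (x0 : triple),
   (forall y, y \in behead (rl x0) -> sT y.2 <= sT x0) ->
   (`|sT x0| < n)%N ->
   forall y, y \in behead (rl x0) -> inN3 y.2 -> LT F y.2 /\ (`|sT y.2| <= `|sT x0|)%N.
  move=> rl x0 hb hlt y yin; have := hb y yin; move: (y.2) => z h1 hz.
  have h2 := inN3_sT hz; split; [apply: IH' => //; lia | lia].
case: (ltrP 0 r) => hr0.
  set x0 : triple := (p, q, r - 1).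
  have hx0 : inN3 x0 by rewrite /inN3 /=; lia.
  apply: (@LT_gen F 0%R rel12 x0).
  - exact: hout.
  - exact: h12.
  - by rewrite /= /addT /=; congr (_,_,_); lia.
  - by apply: co_nz => //; rewrite /x0 /inN3 /addT /sT /=; lia.
  - apply/mnmP => j; rewrite mnmDE !monoE mnm1E.
    by case: j => [[|[|[|j]]] hj] //=; lia.
  - by rewrite /x0 /sT /=; lia.
  - by apply: IH' => //; rewrite -?hn /x0 /sT /=; lia.
  - by apply: hrest => [y yin|]; [apply: rel12_below | rewrite -?hn /x0 /sT /=; lia].
case: (ltrP 0 q) => hq0.
  set x0 : triple := (p, q - 1, r).
  have hx0 : inN3 x0 by rewrite /inN3 /=; lia.
  apply: (@LT_gen F 1%R rel13 x0).
  - exact: hout.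
  - exact: h13.
  - by rewrite /= /addT /=; congr (_,_,_); lia.
  - by apply: co_nz => //; rewrite /x0 /inN3 /addT /sT /=; lia.
  - apply/mnmP => j; rewrite mnmDE !monoE mnm1E.
    by case: j => [[|[|[|j]]] hj] //=; lia.
  - by rewrite /x0 /sT /=; lia.
  - by apply: IH' => //; rewrite -?hn /x0 /sT /=; lia.
  - by apply: hrest => [y yin|]; [apply: rel13_below | rewrite -?hn /x0 /sT /=; lia].
case: (ltrP 0 p) => hp0.
  set x0 : triple := (p - 1, q, r).
  have hx0 : inN3 x0 by rewrite /inN3 /=; lia.
  apply: (@LT_gen F 2%R rel23 x0).
  - exact: hout.
  - exact: h23.
  - by rewrite /= /addT /=; congr (_,_,_); lia.
  - by apply: co_nz => //; rewrite /x0 /inN3 /addT /sT /=; lia.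
  - apply/mnmP => j; rewrite mnmDE !monoE mnm1E.
    by case: j => [[|[|[|j]]] hj] //=; lia.
  - by rewrite /x0 /sT /=; lia.
  - by apply: IH' => //; rewrite -?hn /x0 /sT /=; lia.
  - by apply: hrest => [y yin|]; [apply: rel23_below | rewrite -?hn /x0 /sT /=; lia].
have -> : (p, q, r) = (0, 0, 0) by congr (_,_,_); lia.
exists 1; first exact: oner_neq0.
move=> m _; rewrite hF0 mcoeff1 mul1r; congr (_%:R); congr (_ == _).
by apply/mnmP => j; rewrite monoE mnm0E; case: ifP => _ //; case: ifP.
Qed.

Lemma LT_all x : inN3 x -> LT F x.
Proof. by move=> hx; apply: (@LT_all_n `|sT x|%N). Qed.
End LTall.

Lemma sum_sub (F : triple -> HH) (c : triple -> CC) (s1 s2 : seq triple) :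
  uniq s1 -> uniq s2 -> {subset s1 <= s2} ->
  \sum_(x <- s1) c x *: F x = \sum_(x <- s2) (if x \in s1 then c x else 0) *: F x.
Proof.
move=> u1 u2 sub.
transitivity (\sum_(x <- s2 | x \in s1) c x *: F x); last first.
  by rewrite big_mkcond; apply: eq_bigr => x _; case: ifP => //; rewrite scale0r.
rewrite -[RHS]big_filter; apply: perm_big; apply: uniq_perm => //; first exact: filter_uniq.
by move=> x; rewrite mem_filter; case: (boolP (x \in s1)) => // /sub ->.
Qed.

Section Span.
Variable F : triple -> HH.

Definition span (p : HH) := exists (s : seq triple) (c : triple -> CC),
  [/\ uniq s, all inN3 s & p = \sum_(x <- s) c x *: F x].

Lemma span0 : span 0.
Proof. by exists [::], (fun _ => 0); rewrite big_nil. Qed.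

Lemma spanF x : inN3 x -> span (F x).
Proof. by move=> hx; exists [:: x], (fun _ => 1); rewrite big_seq1 scale1r /= hx. Qed.

Lemma spanZ a p : span p -> span (a *: p).
Proof.
case=> s [c [us has ->]]; exists s, (fun x => a * c x); split => //.
by rewrite scaler_sumr; apply: eq_bigr => x _; rewrite scalerA.
Qed.

Lemma spanD p1 p2 : span p1 -> span p2 -> span (p1 + p2).
Proof.
case=> s1 [c1 [u1 a1 ->]]; case=> s2 [c2 [u2 a2 ->]].
exists (undup (s1 ++ s2)),
  (fun x => (if x \in s1 then c1 x else 0) + (if x \in s2 then c2 x else 0)).
split; first exact: undup_uniq.
  by apply/allP => x; rewrite mem_undup mem_cat => /orP [] h;
     [move/allP: a1 => /(_ x h) | move/allP: a2 => /(_ x h)].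
rewrite (@sum_sub F c1 s1 (undup (s1 ++ s2))) ?undup_uniq //; last first.
  by move=> x h; rewrite mem_undup mem_cat h.
rewrite (@sum_sub F c2 s2 (undup (s1 ++ s2))) ?undup_uniq //; last first.
  by move=> x h; rewrite mem_undup mem_cat h orbT.
by rewrite -big_split; apply: eq_bigr => x _; rewrite scalerDl.
Qed.

Lemma span_sum (I : Type) (r : seq I) (f : I -> HH) :
  (forall i, span (f i)) -> span (\sum_(i <- r) f i).
Proof. by move=> h; apply: big_rec => [|i x _ hx]; [exact: span0 | apply: spanD]. Qed.

Hypothesis hF0 : F (0,0,0) = 1.
Hypothesis hout : forall y, ~~ inN3 y -> F y = 0.
Hypothesis h12 : forall x, inN3 x -> holds u12 rel12 F x.
Hypothesis h13 : forall x, inN3 x -> holds u13 rel13 F x.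
Hypothesis h23 : forall x, inN3 x -> holds u23 rel23 F x.

Lemma spanF' x : span (F x).
Proof. by case hx: (inN3 x); [exact: spanF | rewrite hout ?hx //; exact: span0]. Qed.

Lemma spanX (i : 'I_3) p : span p -> span ('X_i * p).
Proof.
have hi : forall x, inN3 x -> exists rel, holds 'X_i rel F x.
  move=> x hx.
  have : i = 0%R \/ i = 1%R \/ i = 2%R.
    by case: i => [[|[|[|]]] hi] //; [left | right; left | right; right]; apply: val_inj.
  by case=> [->|[->|->]]; [exists rel12; exact: h12 | exists rel13; exact: h13 | exists rel23; exact: h23].
case=> s [c [us has ->]]; rewrite mulr_sumr; apply: span_sum => x.
rewrite -scalerAr; apply: spanZ.
case hx: (inN3 x); last by rewrite hout ?hx // mulr0; exact: span0.
have [rel ->] := hi x hx; apply: span_sum => y; apply: spanZ; exact: spanF'.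
Qed.

Lemma spanXn (i : 'I_3) k p : span p -> span ('X_i ^+ k * p).
Proof.
move=> hp; elim: k => [|k IH]; first by rewrite expr0 mul1r.
by rewrite exprS -mulrA; apply: spanX.
Qed.

Lemma span_all p : span p.
Proof.
rewrite (mpolyE p); apply: span_sum => m; apply: spanZ.
rewrite mpolyXE_id; apply: big_rec => [|i q _ hq]; last exact: spanXn.
by rewrite -hF0; apply: spanF; rewrite /inN3.
Qed.
End Span.

Lemma holds_ext u rel F G x : F =1 G -> holds u rel F x -> holds u rel G x.
Proof.
move=> e; rewrite /holds e => ->; by apply: eq_bigr => y _; rewrite e.
Qed.

Lemma jc0 : jc (0,0,0) = (0,0,0).
Proof. by rewrite /jc /= addr0. Qed.

Definition phiE (t : triple) : HH := Phi (pqr t).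

Lemma FofE : Fof phiE =1 Phi.
Proof.
move=> y; rewrite /Fof /ext adm_jc; case: ifP => hy.
  by rewrite /phiE pqr_jc.
by rewrite Phi_out ?hy.
Qed.

Lemma exist_schur : genus2_schur phiE.
Proof.
split; first by rewrite /phiE -jc0 pqr_jc.
move=> j1 j2 j3 adm.
have [ej hx] := jc_pqr _ adm.
have -> : phiE (j1, j2, j3) = Phi (pqr (j1,j2,j3)) by [].
move: (pqr _) ej hx => x ej hx.
have e1 : j1 = (jc x).1.1 by rewrite ej.
have e2 : j2 = (jc x).1.2 by rewrite ej.
have e3 : j3 = (jc x).2 by rewrite ej.
rewrite e1 e2 e3 conv12 // conv13 // conv23 //.
split.
- by rewrite (R12_all x); apply: eq_bigr => y _; rewrite FofE.
- by rewrite (R13_all x); apply: eq_bigr => y _; rewrite FofE.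
- by rewrite (R23_all x); apply: eq_bigr => y _; rewrite FofE.
Qed.

Section Basis.
Variable phi : triple -> HH.
Hypothesis hphi : genus2_schur phi.

Lemma F0 : Fof phi (0,0,0) = 1.
Proof.
by rewrite /Fof jc0 /ext; case: hphi => -> _.
Qed.

Lemma Fout y : ~~ inN3 y -> Fof phi y = 0.
Proof. by move=> hy; rewrite /Fof /ext adm_jc (negbTE hy). Qed.

Lemma Fadm x : inN3 x -> Fof phi x = phi (jc x).
Proof. by move=> hx; rewrite /Fof /ext adm_jc hx. Qed.

Lemma Frels x : inN3 x ->
  [/\ holds u12 rel12 (Fof phi) x, holds u13 rel13 (Fof phi) x & holds u23 rel23 (Fof phi) x].
Proof.
move=> hx; case: hphi => _ /(_ (jc x).1.1 (jc x).1.2 (jc x).2).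
rewrite -/(jc x) adm_jc => /(_ hx) [e12 e13 e23].
rewrite /holds Fadm //.
by rewrite e12 e13 e23 conv12 // conv13 // conv23.
Qed.

Lemma exists_max (T : eqType) (s : seq T) (P : pred T) (f : T -> nat) :
  has P s -> exists2 t, (t \in s) && P t & forall t', t' \in s -> P t' -> (f t' <= f t)%N.
Proof.
elim: s => [|a s IH] //= /orP [ha|hs].
  case hs: (has P s).
    have [t /andP [ts pt] ht] := IH hs.
    case: (leqP (f a) (f t)) => hle.
      exists t; first by rewrite inE ts orbT pt.
      by move=> t'; rewrite inE => /orP [/eqP ->|] //; apply: ht.
    exists a; first by rewrite inE eqxx ha.
    move=> t'; rewrite inE => /orP [/eqP -> //|t's pt'].
    by apply: leq_trans (ht t' t's pt') (ltnW hle).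
  exists a; first by rewrite inE eqxx ha.
  move=> t'; rewrite inE => /orP [/eqP -> //|t's pt'].
  by move/hasP: hs; case; exists t'.
have [t /andP [ts pt] ht] := IH hs.
case: (boolP (P a)) => pa.
  case: (leqP (f a) (f t)) => hle.
    exists t; first by rewrite inE ts orbT pt.
    by move=> t'; rewrite inE => /orP [/eqP ->|] //; apply: ht.
  exists a; first by rewrite inE eqxx pa.
  move=> t'; rewrite inE => /orP [/eqP -> //|t's pt'].
  by apply: leq_trans (ht t' t's pt') (ltnW hle).
exists t; first by rewrite inE ts orbT pt.
move=> t'; rewrite inE => /orP [/eqP ->|]; [by rewrite (negbTE pa) | exact: ht].
Qed.

Lemma LTphi x : inN3 x -> LT (Fof phi) x.
Proof.
apply: LT_all; [exact: F0 | exact: Fout | | |] => y hy; by case: (Frels _ hy).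
Qed.

Lemma indep (s : seq triple) (c : triple -> CC) :
  uniq s -> all admissible s -> \sum_(t <- s) c t *: phi t = 0 ->
  forall t, t \in s -> c t = 0.
Proof.
move=> us ads hsum t0 t0s; apply/eqP/negPn/negP => nz.
have hphi_t : forall t, t \in s -> phi t = Fof phi (pqr t) /\ inN3 (pqr t).
  move=> t ts; have [e hx] := jc_pqr _ (allP ads t ts).
  by rewrite Fadm // e.
have [tm /andP [tms ctm] hmax] :=
  @exists_max _ s (fun t => c t != 0) (fun t => `|sT (pqr t)|%N) (introT hasP (ex_intro2 _ _ t0 t0s nz)).
have [etm hxm] := hphi_t tm tms.
have [cm ncm hcm] := LTphi _ hxm.
set m := mono (pqr tm).
have := congr1 (mcoeff m) hsum; rewrite mcoeff0 mcoeffS.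
rewrite (bigD1_seq tm) //= big_seq_cond big1; last first.
  move=> t /andP [ts ntm]; rewrite mcoeffZ.
  case: (eqVneq (c t) 0) => [->|nct]; first by rewrite mul0r.
  have [et hx] := hphi_t t ts.
  have [ct nct' hct] := LTphi _ hx.
  rewrite et hct; last by rewrite /m mdeg_mono' //; apply: hmax.
  case: eqP => [em|]; last by rewrite !mulr0.
  have : pqr tm = pqr t by apply: mono_inj.
  move=> ep; move: ntm; have := jc_pqr _ (allP ads t ts); have := jc_pqr _ (allP ads tm tms).
  by rewrite ep => [[-> _] [-> _]]; rewrite eqxx.
rewrite addr0 mcoeffZ etm hcm; last by rewrite /m mdeg_mono'.
rewrite eqxx mulr1 => /eqP; rewrite mulf_eq0 (negbTE ctm) (negbTE ncm).
by [].
Qed.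

Lemma spanning (p : HH) : exists (s : seq triple) (c : triple -> CC),
  all admissible s /\ p = \sum_(t <- s) c t *: phi t.
Proof.
have [s [c [us has ep]]] : span (Fof phi) p.
  apply: span_all; [exact: F0 | exact: Fout | | |] => y hy; by case: (Frels _ hy).
exists (map jc s), (fun t => c (pqr t)); split.
  by rewrite all_map; apply/allP => x xs; change (admissible (jc x)); rewrite adm_jc; exact: (allP has x xs).
rewrite ep big_map; apply: eq_big_seq => x xs.
by rewrite pqr_jc Fadm //; exact: (allP has x xs).
Qed.

End Basis.

Theorem mainTheorem6 :
  (exists phi : triple -> HH, genus2_schur phi) /\
  (forall phi : triple -> HH, genus2_schur phi -> is_basis_on_J phi).
Proof.
split; first by exists phiE; exact: exist_schur.
move=> phi hphi; split; [exact: indep | exact: spanning].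
Qed.
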